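(* Suppose $\sigma$ is an automorphism of the division ring $D$ and the skew polynomial ring $R=D[t;\sigma,\delta]$ is simple. Then there is no monic $f\in R$ of degree $m\ge 2$ such that $S_f$ is nonassociative and $D\subseteq \mathrm{Nuc}_r(S_f)$. In particular, there is no such $f$ with $S_f$ nonassociative and $D\subseteq\mathrm{Nuc}(S_f)$.
   Context: $D$ is an associative division ring, $\sigma$ a ring endomorphism of $D$, $\delta$ a left $\sigma$-derivation ($\delta$ additive, $\delta(ab)=\sigma(a)\delta(b)+\delta(a)b$). $R=D[t;\sigma,\delta]$ is the skew polynomial ring with $ta=\sigma(a)t+\delta(a)$. For monic $f\in R$ of degree $m$, $S_f$ denotes the set of polynomials of degree $<m$ with multiplication $g\circ h=$ remainder of $gh$ upon right division by $f$ (i.e. $gh=qf+r$, $\deg r<m$, and $g\circ h=r$). Associator $[x,y,z]=(xy)z-x(yz)$; $\mathrm{Nuc}_r(A)=\{x:[A,A,x]=0\}$, and $\mathrm{Nuc}(A)$ is the set of $x$ with $[x,A,A]=[A,x,A]=[A,A,x]=0$. $D$ is identified with the constant polynomials in $S_f$. *)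

(* Defs.v *)
(* Skew polynomial rings D[t; sigma, delta] over a division
   ring D, represented on the additive group {poly D} (coefficient lists,
   p = \sum_i p`_i t^i with coefficients on the LEFT), with the skew product
   defined below. *)
From HB Require Import structures.
From mathcomp Require Import all_boot all_order all_algebra.
Set Implicit Arguments. Unset Strict Implicit. Unset Printing Implicit Defensive.
Import GRing.Theory.
Local Open Scope ring_scope.

Section Skew.
Variable D : unitRingType.
Variables (sigma delta : D -> D).

Definition division_ring := forall x : D, x != 0 -> x \is a GRing.unit.

Definition left_sigma_derivation :=
  (forall a b, delta (a + b) = delta a + delta b) /\
  (forall a b, delta (a * b) = sigma a * delta b + delta a * b).

(* left multiplication by t: t * (\sum q_j t^j) = \sum (sigma q_j t^(j+1) + delta q_j t^j) *)
Definition tmul (q : {poly D}) : {poly D} :=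
  map_poly sigma q * 'X + map_poly delta q.

Definition skew_mul (p q : {poly D}) : {poly D} :=
  \sum_(i < size p) p`_i *: iter i tmul q.

Definition skew_ideal (I : {poly D} -> Prop) :=
  [/\ I 0, (forall x y, I x -> I y -> I (x + y)), (forall x, I x -> I (- x)),
      (forall r x, I x -> I (skew_mul r x)) & (forall r x, I x -> I (skew_mul x r))].

Definition skew_simple :=
  forall I, skew_ideal I -> (forall x, I x -> x = 0) \/ (forall x, I x).

(* Right division by a monic f: one reduction step kills the leading term of p
   using lead_coef p * t^(deg p - deg f) * f (which has leading coefficient
   lead_coef p since f is monic and sigma(1) = 1). *)
Definition rdiv_step (f p : {poly D}) : {poly D} :=
  p - lead_coef p *: skew_mul 'X^(size p - size f) f.

Fixpoint rmod_fuel (n : nat) (f p : {poly D}) : {poly D} :=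
  match n with
  | 0 => p
  | n'.+1 => if (size p < size f)%N then p else rmod_fuel n' f (rdiv_step f p)
  end.

Definition skew_rmod (p f : {poly D}) : {poly D} := rmod_fuel (size p) f p.

Definition Sf_mul (f g h : {poly D}) : {poly D} := skew_rmod (skew_mul g h) f.

Definition in_Sf (f g : {poly D}) := (size g < size f)%N.

Definition Sf_assoc (f x y z : {poly D}) : {poly D} :=
  Sf_mul f (Sf_mul f x y) z - Sf_mul f x (Sf_mul f y z).

Definition Sf_nonassociative (f : {poly D}) :=
  exists x y z, [/\ in_Sf f x, in_Sf f y, in_Sf f z & Sf_assoc f x y z != 0].

Definition in_Nuc_r (f x : {poly D}) :=
  forall y z, in_Sf f y -> in_Sf f z -> Sf_assoc f y z x = 0.

Definition in_Nuc (f x : {poly D}) :=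
  forall y z, in_Sf f y -> in_Sf f z ->
    [/\ Sf_assoc f x y z = 0, Sf_assoc f y x z = 0 & Sf_assoc f y z x = 0].

End Skew.

(* Main.v *)
Require Import Defs.
From HB Require Import structures.
From mathcomp Require Import all_boot all_order all_algebra zify.
Set Implicit Arguments. Unset Strict Implicit. Unset Printing Implicit Defensive.
Import GRing.Theory.
Local Open Scope ring_scope.

Section Dev.
Variable D : unitRingType.
Variable sigma : {rmorphism D -> D}.
Variable delta : D -> D.
Hypothesis Hdiv : division_ring D.
Hypothesis Hder : left_sigma_derivation sigma delta.

Local Notation T := (tmul sigma delta).
Local Notation "p ** q" := (skew_mul sigma delta p q) (at level 40, left associativity).

Lemma deltaD (a b : D) : delta (a + b) = delta a + delta b.
Proof. by case: Hder. Qed.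
Lemma deltaM (a b : D) : delta (a * b) = sigma a * delta b + delta a * b.
Proof. by case: Hder. Qed.
Lemma delta0 : delta 0 = 0.
Proof. by apply: (addrI (delta 0)); rewrite addr0 -deltaD addr0. Qed.
Lemma delta1 : delta 1 = 0.
Proof.
have := deltaM 1 1; rewrite mulr1 rmorph1 mul1r mulr1 => h.
by apply: (addrI (delta 1)); rewrite addr0 -{1}h.
Qed.

Lemma mulf_neq0D (a b : D) : a != 0 -> b != 0 -> a * b != 0.
Proof.
move=> a0 b0; apply/eqP => ab0; move/eqP: b0; apply.
by rewrite -(mulKr (Hdiv a0) b) ab0 mulr0.
Qed.

Lemma sigma_neq0 (a : D) : a != 0 -> sigma a != 0.
Proof.
move=> a0; apply/eqP => sa; have := rmorph_unit sigma (Hdiv a0).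
by rewrite sa unitr0.
Qed.

Lemma iter_sigma_neq0 k (a : D) : a != 0 -> iter k sigma a != 0.
Proof. by move=> a0; elim: k => //= k IH; apply: sigma_neq0. Qed.

Lemma iter_sigma1 k : iter k sigma 1 = 1.
Proof. by elim: k => //= k ->; rewrite rmorph1. Qed.

Lemma coefT (q : {poly D}) i : (T q)`_i = (if i == 0%N then 0 else sigma q`_i.-1) + delta q`_i.
Proof.
by rewrite /tmul coefD coefMX !coef_map_id0 ?delta0 ?rmorph0 //; case: i.
Qed.

Lemma T0 : T 0 = 0.
Proof. by apply/polyP => i; rewrite coefT !coef0 rmorph0 delta0 addr0; case: (i == 0%N). Qed.

Lemma TD (p q : {poly D}) : T (p + q) = T p + T q.
Proof.
apply/polyP => i; rewrite coefD !coefT !coefD deltaD rmorphD.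
by case: (i == 0%N); rewrite ?add0r // addrACA.
Qed.

Lemma TZ (a : D) (q : {poly D}) : T (a *: q) = sigma a *: T q + delta a *: q.
Proof.
apply/polyP => i; rewrite [LHS]coefT !coefZ [RHS]coefD !coefZ coefT deltaM rmorphM mulrDr addrA.
by case: (i == 0%N); rewrite ?mulr0 ?add0r.
Qed.

Lemma iterT0 k : iter k T 0 = 0.
Proof. by elim: k => //= k ->; apply: T0. Qed.

Lemma iterTD k (p q : {poly D}) : iter k T (p + q) = iter k T p + iter k T q.
Proof. by elim: k => //= k ->; apply: TD. Qed.

Lemma TXn (k : nat) : T ('X^k : {poly D}) = 'X^(k.+1).
Proof.
apply/polyP => i; rewrite coefT !coefXn.
case: i => [|i] /=; first by rewrite add0r; case: (0 == k)%N; rewrite ?delta1 ?delta0.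
rewrite eqSS; case: (i == k); rewrite ?rmorph1 ?rmorph0.
  by case: (i.+1 == k); rewrite ?delta1 ?delta0 addr0.
by case: (i.+1 == k); rewrite ?delta1 ?delta0 addr0.
Qed.

Lemma iterTXn (k j : nat) : iter k T ('X^j : {poly D}) = 'X^(k + j).
Proof. by elim: k => //= k ->; rewrite TXn. Qed.

Lemma iterT_hi k (q : {poly D}) j : (size q + k <= j)%N -> (iter k T q)`_j = 0.
Proof.
elim: k j => [|k IH] j /=; first by rewrite addn0 => /leq_sizeP; apply.
move=> hj; rewrite coefT (IH j); last by rewrite addnS in hj; apply: ltnW.
rewrite delta0 addr0; case: j hj => [|j] hj /=; first by [].
by rewrite (IH j) ?rmorph0 // -ltnS -addnS.
Qed.

Lemma iterT_top k (q : {poly D}) : q != 0 ->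
  (iter k T q)`_(size q + k).-1 = iter k sigma (lead_coef q).
Proof.
move=> q0; have sq : (0 < size q)%N by rewrite size_poly_gt0.
elim: k => [|k IH] /=; first by rewrite addn0.
rewrite addnS /= coefT (iterT_hi (leqnn _)) delta0 addr0.
have -> : (size q + k == 0)%N = false by rewrite addn_eq0 -[size q == 0%N]negbK -lt0n sq.
by rewrite IH.
Qed.


Lemma skew_mulE_le n (p q : {poly D}) : (size p <= n)%N ->
  p ** q = \sum_(i < n) p`_i *: iter i T q.
Proof.
move=> hn; rewrite /skew_mul (big_ord_widen n (fun i => p`_i *: iter i T q) hn) big_mkcond.
apply: eq_bigr => i _; case: ifP => // /negbT; rewrite -leqNgt => h.
by rewrite nth_default // scale0r.
Qed.

Lemma skew_mul0l (q : {poly D}) : 0 ** q = 0.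
Proof. by rewrite /skew_mul size_poly0 big_ord0. Qed.

Lemma skew_mulDl (p p' q : {poly D}) : (p + p') ** q = p ** q + p' ** q.
Proof.
set n := maxn (size p) (size p').
rewrite !(@skew_mulE_le n) ?leq_maxl ?leq_maxr ?(leq_trans (size_add _ _)) //.
by rewrite -big_split; apply: eq_bigr => i _; rewrite coefD scalerDl.
Qed.

Lemma skew_mulZl (a : D) (p q : {poly D}) : (a *: p) ** q = a *: (p ** q).
Proof.
rewrite !(@skew_mulE_le (size p)) ?size_scale_leq // scaler_sumr.
by apply: eq_bigr => i _; rewrite coefZ scalerA.
Qed.

Lemma skew_mulNl (p q : {poly D}) : (- p) ** q = - (p ** q).
Proof. by rewrite -scaleN1r skew_mulZl scaleN1r. Qed.

Lemma skew_mulBl (p p' q : {poly D}) : (p - p') ** q = p ** q - p' ** q.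
Proof. by rewrite skew_mulDl skew_mulNl. Qed.

Lemma skew_mul0r (p : {poly D}) : p ** 0 = 0.
Proof. by rewrite /skew_mul big1 // => i _; rewrite iterT0 scaler0. Qed.

Lemma skew_mulDr (p q q' : {poly D}) : p ** (q + q') = p ** q + p ** q'.
Proof. by rewrite /skew_mul -big_split; apply: eq_bigr => i _; rewrite iterTD scalerDr. Qed.

Lemma skew_mulXn k (q : {poly D}) : 'X^k ** q = iter k T q.
Proof.
rewrite /skew_mul size_polyXn big_ord_recr /= big1 ?add0r.
  by rewrite coefXn eqxx scale1r.
by move=> i _; rewrite coefXn /= ltn_eqF // scale0r.
Qed.

Lemma skew_mul1l (q : {poly D}) : 1 ** q = q.
Proof. by rewrite -(expr0 'X) skew_mulXn. Qed.

Lemma skew_mulCl (c : D) (q : {poly D}) : c%:P ** q = c *: q.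
Proof. by rewrite -alg_polyC skew_mulZl skew_mul1l. Qed.

Lemma T_sum n (F : 'I_n -> {poly D}) : T (\sum_(i < n) F i) = \sum_(i < n) T (F i).
Proof. exact: (big_morph T TD T0). Qed.

Lemma T_mul (p q : {poly D}) : T (p ** q) = (T p) ** q.
Proof.
rewrite (@skew_mulE_le (size p) p) // (@skew_mulE_le (size p).+1 (T p)); last first.
  by apply/leq_sizeP => j hj; have := @iterT_hi 1 p j; rewrite addn1; apply.
rewrite T_sum; under eq_bigr do rewrite TZ.
under [RHS]eq_bigr do rewrite coefT scalerDl.
rewrite big_split /= [RHS]big_split /= big_ord_recl /= scale0r add0r.
rewrite [X in _ = _ + X]big_ord_recr /= nth_default // delta0 scale0r addr0.
by congr (_ + _); apply: eq_bigr => i _.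
Qed.

Lemma iterT_mul k (p q : {poly D}) : iter k T (p ** q) = (iter k T p) ** q.
Proof. by elim: k => //= k ->; rewrite T_mul. Qed.

Lemma skew_mul_sum n (F : 'I_n -> {poly D}) r :
  (\sum_(i < n) F i) ** r = \sum_(i < n) (F i ** r).
Proof. exact: (big_morph (fun p => p ** r) (fun p q => skew_mulDl p q r) (skew_mul0l r)). Qed.

Lemma skew_mulA (p q r : {poly D}) : p ** (q ** r) = (p ** q) ** r.
Proof.
rewrite (@skew_mulE_le (size p) p) // (@skew_mulE_le (size p) p q) //.
rewrite skew_mul_sum; apply: eq_bigr => i _.
by rewrite iterT_mul skew_mulZl.
Qed.


Lemma gt_size_coef (p : {poly D}) n : p`_n != 0 -> (n < size p)%N.
Proof. by move=> pn; rewrite ltnNge; apply/negP => /leq_sizeP h; rewrite h ?eqxx in pn. Qed.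

Lemma coef_mul_hi (p q : {poly D}) j : (size p + size q <= j.+1)%N -> (p ** q)`_j = 0.
Proof.
move=> hj; rewrite /skew_mul coef_sum big1 // => i _.
rewrite coefZ iterT_hi ?mulr0 //; have := ltn_ord i; lia.
Qed.

Lemma size_mul_le (p q : {poly D}) : (size (p ** q) <= (size p + size q).-1)%N.
Proof. by apply/leq_sizeP => j hj; apply: coef_mul_hi; lia. Qed.

Lemma coef_mul_top (p q : {poly D}) : p != 0 -> q != 0 ->
  (p ** q)`_(size p + size q).-2 = lead_coef p * iter (size p).-1 sigma (lead_coef q).
Proof.
move=> p0 q0; have sq : (0 < size q)%N by rewrite size_poly_gt0.
rewrite /skew_mul coef_sum lead_coefE.
have : (0 < size p)%N by rewrite size_poly_gt0.
case: (size p) => [//|n] _ /=.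
rewrite big_ord_recr /= big1 ?add0r.
  by rewrite coefZ -iterT_top // addnC.
move=> i _; rewrite coefZ iterT_hi ?mulr0 //; have := ltn_ord i; move: sq.
by case: (size q) => [//|s] _; rewrite addnS /=; lia.
Qed.

Lemma size_eq_of (p : {poly D}) n : p`_n != 0 -> (forall j, (n < j)%N -> p`_j = 0) ->
  size p = n.+1.
Proof.
move=> pn hj; apply/eqP; rewrite eqn_leq gt_size_coef // andbT.
by apply/leq_sizeP => j; apply: hj.
Qed.

Lemma size_mulC (r : {poly D}) a : (size (r ** a%:P) <= size r)%N.
Proof. apply: (leq_trans (size_mul_le _ _)); have := size_polyC_leq1 a; lia. Qed.

Section Mod.
Variable f : {poly D}.
Hypothesis fmon : f \is monic.

Lemma f_neq0 : f != 0. Proof. exact: monic_neq0. Qed.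
Lemma sf_gt0 : (0 < size f)%N. Proof. by rewrite size_poly_gt0 f_neq0. Qed.
Lemma lead_f : lead_coef f = 1. Proof. exact: (monicP fmon). Qed.

Lemma size_mulf (q : {poly D}) : q != 0 -> (size f <= size (q ** f))%N.
Proof.
move=> q0; have := coef_mul_top q0 f_neq0; rewrite lead_f iter_sigma1 mulr1 => h.
have : (q ** f)`_(size q + size f).-2 != 0 by rewrite h lead_coef_eq0.
move/gt_size_coef; have := sf_gt0; have : (0 < size q)%N by rewrite size_poly_gt0.
case: (size q) => [//|s] _; case: (size f) => [//|t] _; rewrite addSn addnS /=; lia.
Qed.

Lemma coef_Xnf k j : ('X^k ** f)`_j = if j == (size f + k).-1 then 1 else if (size f + k <= j)%N then 0 else ('X^k ** f)`_j.
Proof.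
case: eqP => [->|_]; first by rewrite skew_mulXn iterT_top ?f_neq0 // lead_f iter_sigma1.
by case: ifP => // h; rewrite skew_mulXn iterT_hi.
Qed.

Lemma size_rdiv_step (p : {poly D}) : (size f <= size p)%N -> (size (rdiv_step sigma delta f p) < size p)%N.
Proof.
move=> hp; have p0 : p != 0 by rewrite -size_poly_gt0; apply: leq_trans hp; apply: sf_gt0.
have sp : (0 < size p)%N by rewrite size_poly_gt0.
rewrite /rdiv_step; set k := (size p - size f)%N.
suff : (size (p - lead_coef p *: ('X^k ** f))%R <= (size p).-1)%N.
  by rewrite /rdiv_step -/k; move: sp; case: (size p) => [//|s] _ /=; rewrite ltnS.
apply/leq_sizeP => j hj; rewrite coefB coefZ coef_Xnf.
have e : (size f + k = size p)%N by rewrite /k; lia.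
rewrite e; case: eqP => [->|ne]; first by rewrite mulr1 lead_coefE subrr.
have hj' : (size p <= j)%N.
  move: hj ne sp; case: (size p) => [//|s] /= h1 h2 _.
  by rewrite ltn_neqAle h1 andbT; apply/eqP => h; apply: h2.
by rewrite hj' mulr0 subr0; move/leq_sizeP: (leqnn (size p)); apply.
Qed.

Lemma rmod_fuelP n (p : {poly D}) : (size p <= n)%N ->
  exists q, p = q ** f + rmod_fuel sigma delta n f p /\ (size (rmod_fuel sigma delta n f p) < size f)%N.
Proof.
elim: n p => [|n IH] p hp /=.
  move: hp; rewrite leqn0 size_poly_eq0 => /eqP ->.
  by exists 0; rewrite skew_mul0l add0r size_poly0 sf_gt0.
case: ifP => [h|/negbT]; first by exists 0; rewrite skew_mul0l add0r.
rewrite -leqNgt => h.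
have hs := size_rdiv_step h.
have [q' [e1 e2]] := IH (rdiv_step sigma delta f p) (leq_trans (leq_trans hs hp) (leqnn _)).
exists (q' + lead_coef p *: 'X^(size p - size f)); split=> //.
rewrite skew_mulDl skew_mulZl -addrA [_ *: _ + _]addrC addrA -e1.
by rewrite /rdiv_step subrK.
Qed.

Lemma rmodP (p : {poly D}) : exists q, p = q ** f + skew_rmod sigma delta p f /\ (size (skew_rmod sigma delta p f) < size f)%N.
Proof. exact: (rmod_fuelP (leqnn _)). Qed.

Lemma rmod_uniq (p q r : {poly D}) : (size r < size f)%N -> p = q ** f + r -> skew_rmod sigma delta p f = r.
Proof.
move=> hr e; have [q' [e' hr']] := rmodP p.
have : (q - q') ** f = skew_rmod sigma delta p f - r.
  have e1 : q ** f = p - r by rewrite e addrK.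
  have e2 : q' ** f = p - skew_rmod sigma delta p f by rewrite {1}e' addrK.
  by rewrite skew_mulBl e1 e2 opprB addrC addrA subrK.
case: (eqVneq (q - q') 0) => [->|nz].
  by rewrite skew_mul0l => /eqP; rewrite eq_sym subr_eq0 => /eqP.
move=> e2; have := size_mulf nz; rewrite e2 => h.
have := leq_trans h (size_add _ _); rewrite size_opp leq_max => /orP [h1|h1].
  by move: hr'; rewrite ltnNge h1.
by move: hr; rewrite ltnNge h1.
Qed.

Lemma rmod_small (r : {poly D}) : (size r < size f)%N -> skew_rmod sigma delta r f = r.
Proof. by move=> h; apply: (rmod_uniq (q := 0)) => //; rewrite skew_mul0l add0r. Qed.

Lemma rmod_mulf (q : {poly D}) : skew_rmod sigma delta (q ** f) f = 0.
Proof. by apply: (rmod_uniq (q := q)); rewrite ?addr0 ?size_poly0 ?sf_gt0. Qed.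

Lemma rmodD (p p' : {poly D}) : skew_rmod sigma delta (p + p') f = skew_rmod sigma delta p f + skew_rmod sigma delta p' f.
Proof.
have [q [e h]] := rmodP p; have [q' [e' h']] := rmodP p'.
apply: (rmod_uniq (q := q + q')).
  by apply: leq_ltn_trans (size_add _ _) _; rewrite gtn_max h h'.
by rewrite skew_mulDl {1}e {1}e' addrACA.
Qed.

Lemma rmodZ (a : D) (p : {poly D}) : skew_rmod sigma delta (a *: p) f = a *: skew_rmod sigma delta p f.
Proof.
have [q [e h]] := rmodP p.
apply: (rmod_uniq (q := a *: q)); first by apply: leq_ltn_trans (size_scale_leq _ _) h.
by rewrite skew_mulZl {1}e scalerDr.
Qed.

Lemma rmod0 : skew_rmod sigma delta 0 f = 0.
Proof. by rewrite rmod_small // size_poly0 sf_gt0. Qed.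

Lemma rmod_sum n (F : 'I_n -> {poly D}) :
  skew_rmod sigma delta (\sum_(i < n) F i) f = \sum_(i < n) skew_rmod sigma delta (F i) f.
Proof. exact: (big_morph (fun p => skew_rmod sigma delta p f) rmodD rmod0). Qed.

Lemma rmod_eq0 (p : {poly D}) : skew_rmod sigma delta p f = 0 -> exists q, p = q ** f.
Proof. by have [q [e _]] := rmodP p; move=> h; exists q; rewrite {1}e h addr0. Qed.



Lemma dep_lemma n : forall N (w : nat -> nat -> D), (n < N)%N ->
  exists a : nat -> D, (exists2 i, (i < N)%N & a i != 0) /\
    forall k, (k < n)%N -> \sum_(i < N) a i * w i k = 0.
Proof.
elim: n => [|n IH] N w hN.
  by exists (fun _ => 1); split => //; exists 0%N => //; apply: oner_neq0.
case: N w hN => [//|N'] w hN.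
have [/existsP [j hj] | none] := boolP [exists i : 'I_N'.+1, w i n != 0].
  set l := fun i => w (bump j i) n * (w j n)^-1.
  set w' := fun i k => w (bump j i) k - l i * w j k.
  have [b [[i0 hi0 bi0] hb]] := IH N' w' (ltnSE hN).
  pose a x := if x == (j : nat) then - \sum_(i < N') b i * l i else b (unbump j x).
  exists a; split.
    exists (bump j i0).
      by rewrite /bump; case: (j <= i0)%N; rewrite /= ?add1n ?add0n ?ltnS //; apply: ltnW.
    by rewrite /a [bump _ _ == _]eq_sym (negbTE (neq_bump _ _)) bumpK.
  have key : forall k, \sum_(i < N'.+1) a i * w i k = \sum_(i < N') b i * w' i k.
    move=> k; rewrite (bigD1_ord j) //= /a eqxx.
    under eq_bigr do rewrite /= [bump _ _ == _]eq_sym (negbTE (neq_bump _ _)) bumpK.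
    rewrite /w'; under [RHS]eq_bigr do rewrite mulrBr mulrA.
    by rewrite sumrB -mulr_suml mulNr addrC.
  move=> k hk; rewrite key; case: (ltngtP k n) => [kn|//|->]; first by apply: hb.
    by move: hk; rewrite ltnS leqNgt => /negP.
  by rewrite big1 // => i _; rewrite /w' /l divrK ?subrr ?mulr0 //; apply: Hdiv.
have {}none : forall i : 'I_N'.+1, w i n = 0.
  by move=> i; move: none; rewrite negb_exists => /forallP /(_ i); rewrite negbK => /eqP.
have [a [ha hb]] := IH N'.+1 w (ltnW hN).
exists a; split => // k; rewrite ltnS leq_eqVlt => /orP [/eqP ->|]; last by apply: hb.
by rewrite big1 // => i _; rewrite none mulr0.
Qed.


Hypothesis f3 : (3 <= size f)%N.

Local Notation rmod p := (skew_rmod sigma delta p f).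

Lemma XnX (k : nat) : ('X^k : {poly D}) ** 'X = 'X^(k.+1).
Proof. by rewrite skew_mulXn -(expr1 'X) iterTXn addn1. Qed.

Lemma size_sub_lead (y u : {poly D}) n : size y = n.+1 -> u`_n = lead_coef y ->
  (forall j, (n < j)%N -> u`_j = 0) -> (size (y - u)%R <= n)%N.
Proof.
move=> sy un uj; apply/leq_sizeP => j; rewrite leq_eqVlt => /orP [/eqP <-|hj].
  by rewrite coefB un lead_coefE sy subrr.
rewrite coefB uj // subr0; move/leq_sizeP: (leqnn (size y)); apply; rewrite sy; exact: hj.
Qed.

Lemma nucr_semi a : in_Nuc_r sigma delta f a%:P -> exists q, f ** a%:P = q ** f.
Proof.
move=> hn; set M := (size f).-1.
have eM : size f = M.+1 by rewrite /M; move: f3; case: (size f).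
have M2 : (2 <= M)%N by move: f3; rewrite eM.
set r := 'X^M - f.
have sr : (size r < size f)%N.
  rewrite eM ltnS; apply/leq_sizeP => j; rewrite leq_eqVlt => /orP [/eqP <-|hj].
    by rewrite coefB coefXn eqxx -lead_f lead_coefE eM subrr.
  rewrite coefB coefXn (gtn_eqF hj) sub0r; apply/eqP; rewrite oppr_eq0; apply/eqP.
  by apply/leq_sizeP: hj; rewrite eM.
have eXM : 'X^M = f + r by rewrite /r addrC subrK.
have h1 : rmod ('X^M) = r.
  by apply: (rmod_uniq (q := 1)) => //; rewrite skew_mul1l.
have eM1 : M.-1.+1 = M by rewrite prednK // ltnW.
have hy : in_Sf f ('X^(M.-1) : {poly D}) by rewrite /in_Sf size_polyXn eM eM1.
have hz : in_Sf f ('X : {poly D}) by rewrite /in_Sf size_polyX eM ltnS.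
have := hn _ _ hy hz; rewrite /Sf_assoc /Sf_mul XnX.
rewrite eM1.
rewrite h1 rmod_small ?(leq_ltn_trans (size_mulC _ _)) //.
rewrite (rmod_small (r := 'X ** a%:P)); last first.
  apply: leq_ltn_trans (size_mul_le _ _) _; rewrite size_polyX eM.
  have := size_polyC_leq1 a; move: M2; case: (size a%:P) => [|[|//]] _ _ /=; lia.
rewrite skew_mulA XnX.
rewrite eM1.
rewrite eXM skew_mulDl rmodD (rmod_small (r := r ** a%:P)) ?(leq_ltn_trans (size_mulC _ _)) //.
rewrite opprD addrCA subrr addr0 => /eqP; rewrite oppr_eq0 => /eqP.
exact: rmod_eq0.
Qed.


Lemma rmod_size p : (size (rmod p) <= (size f).-1)%N.
Proof. have [_ [_ h]] := rmodP p; move: h; case: (size f) => //. Qed.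

Lemma ann_exists : exists2 h : {poly D}, h != 0 &
  forall j, (j < (size f).-1)%N -> rmod (h ** 'X^j) = 0.
Proof.
set M := (size f).-1.
have M0 : (0 < M)%N by rewrite /M; move: f3; case: (size f) => // [[|[|]]].
pose w i k := (rmod ('X^i ** 'X^(k %/ M)))`_(k %% M).
have [a [[i0 hi0 ai0] ha]] := @dep_lemma (M * M) (M * M).+1 w (ltnSn _).
exists (\poly_(i < (M * M).+1) a i).
  by apply/eqP => /polyP /(_ i0); rewrite coef_poly hi0 coef0; apply/eqP.
move=> j hj; apply/polyP => l; rewrite coef0.
rewrite poly_def skew_mul_sum rmod_sum coef_sum.
under eq_bigr do rewrite skew_mulZl rmodZ coefZ.
case: (ltnP l M) => hl.
  have := ha (j * M + l)%N; rewrite /w divnMDl // modnMDl (divn_small hl) (modn_small hl) addn0.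
  apply; apply: (@leq_trans (j.+1 * M)); first by rewrite mulSn addnC ltn_add2r.
  by rewrite leq_mul2r hj orbT.
rewrite big1 // => i _.
by move/leq_sizeP: (rmod_size ('X^i ** 'X^j)) => ->; rewrite ?mulr0.
Qed.


Lemma ann_all (h : {poly D}) (sbij : bijective sigma) :
  (forall j, (j < (size f).-1)%N -> rmod (h ** 'X^j) = 0) ->
  (forall a, exists q, f ** a%:P = q ** f) ->
  forall y, exists q, h ** y = q ** f.
Proof.
move=> hh semi; set M := (size f).-1.
have eM : size f = M.+1 by rewrite /M; move: f3; case: (size f).
case: sbij => g sg gs.
have iterg n c : iter n sigma (iter n g c) = c.
  by elim: n c => // n IH c; rewrite [iter n.+1 g c]iterSr iterS IH gs.
suff : forall n (y : {poly D}), (size y <= n)%N -> exists q, h ** y = q ** f.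
  by move=> H y; apply: (H (size y)).
elim=> [|n IH] y hy.
  move: hy; rewrite leqn0 size_poly_eq0 => /eqP ->.
  by exists 0; rewrite skew_mul0r skew_mul0l.
case: (ltnP (size y) n.+1) => [hy'|hy']; first by apply: IH.
have sy : size y = n.+1 by apply/eqP; rewrite eqn_leq hy hy'.
set c := lead_coef y.
have [u [un uj [q hu]]] : exists u : {poly D}, [/\ u`_n = c,
     (forall j, (n < j)%N -> u`_j = 0) & exists q, h ** u = q ** f].
  case: (ltnP n M) => hn.
    set e := iter n g c.
    have c0 : c != 0 by rewrite lead_coef_eq0 -size_poly_eq0 sy.
    have iter0 k : iter k sigma 0 = 0 by elim: k => //= k ->; rewrite rmorph0.
    have e0 : e != 0 by apply/eqP => e0; move/eqP: c0; apply; rewrite -(iterg n c) -/e e0 iter0.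
    exists ('X^n ** e%:P); split.
    - have se : size (e%:P) = 1%N by rewrite size_polyC e0.
      have t := @iterT_top n e%:P; rewrite se add1n lead_coefC iterg in t.
      by rewrite skew_mulXn t // polyC_eq0.
    - move=> j hj; rewrite skew_mulXn iterT_hi //; rewrite size_polyC e0 add1n //.
    - have [q1 e1] := rmod_eq0 (hh n hn); have [q2 e2] := semi e.
      by exists (q1 ** q2); rewrite skew_mulA e1 -skew_mulA e2 skew_mulA.
  exists ((c *: 'X^(n - M)) ** f); split.
  - by rewrite skew_mulZl coefZ coef_Xnf eM /= addSn subnKC // eqxx mulr1.
  - move=> j hj; rewrite skew_mulZl coefZ coef_Xnf eM addSn subnKC //= (gtn_eqF hj).
    by rewrite hj mulr0.
  - by exists (h ** (c *: 'X^(n - M))); rewrite skew_mulA.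
have := size_sub_lead sy un uj => /IH [q' e'].
by exists (q' + q); rewrite -(subrK u y) skew_mulDr e' hu skew_mulDl.
Qed.


End Mod.

Lemma main_first (sbij : bijective sigma) (simp : skew_simple sigma delta) :
  ~ exists f : {poly D}, [/\ f \is monic, (3 <= size f)%N,
        Sf_nonassociative sigma delta f &
        forall a : D, in_Nuc_r sigma delta f a%:P].
Proof.
case=> f [fmon f3 _ hn].
have semi := fun a => nucr_semi fmon f3 (hn a).
have [h h0 hh] := ann_exists fmon f3.
pose I x := forall y, exists q, x ** y = q ** f.
have hI : skew_ideal sigma delta I.
  split.
  - by move=> y; exists 0; rewrite !skew_mul0l.
  - move=> x x' hx hx' y; have [q e] := hx y; have [q' e'] := hx' y.
    by exists (q + q'); rewrite skew_mulDl e e' skew_mulDl.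
  - move=> x hx y; have [q e] := hx y.
    by exists (-q); rewrite skew_mulNl e skew_mulNl.
  - move=> r x hx y; have [q e] := hx y.
    by exists (r ** q); rewrite -skew_mulA e skew_mulA.
  - move=> r x hx y; have [q e] := hx (r ** y).
    by exists q; rewrite -skew_mulA e.
case: (simp I hI) => [H|H].
  by move/eqP: h0; apply; apply: H; apply: (ann_all fmon f3 sbij hh semi).
have [q e] := H 1 1; rewrite skew_mul1l in e.
have q0 : q != 0.
  by apply/eqP => q0; move: e; rewrite q0 skew_mul0l => /eqP; rewrite oner_eq0.
have := size_mulf fmon q0; rewrite -e size_poly1 => h1; move: f3; lia.
Qed.

End Dev.

Unset Implicit Arguments.
Set Strict Implicit.

Theorem mainTheorem2 (D : unitRingType) (sigma : {rmorphism D -> D})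
    (delta : D -> D) :
  division_ring D -> bijective sigma ->
  left_sigma_derivation sigma delta ->
  skew_simple sigma delta ->
  (~ exists f : {poly D}, [/\ f \is monic, (3 <= size f)%N,
        Sf_nonassociative sigma delta f &
        forall a : D, in_Nuc_r sigma delta f a%:P]) /\
  (~ exists f : {poly D}, [/\ f \is monic, (3 <= size f)%N,
        Sf_nonassociative sigma delta f &
        forall a : D, in_Nuc sigma delta f a%:P]).
Proof.
move=> Hdiv sbij Hder simp.
have first := main_first Hdiv Hder sbij simp.
split => //.
case=> f [fmon f3 na hn]; apply: first; exists f; split => // a y z hy hz.
by case: (hn a y z hy hz).
Qed.
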